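(* There is a finitely generated infinite group $G$ and a Cayley graph $\mathrm{Cay}(G;S)$ of $G$ (with $S$ a finite generating set) which does not have any regular spanning tree.
   Context: $\mathrm{Cay}(G;S)$ has vertex set $G$, with $g$ adjacent to $gs$ for $s\in S\cup S^{-1}$. A regular spanning tree is a subgraph that is a tree containing every vertex, in which all vertices have the same degree. *)

(* Defs.v *)
From Stdlib Require Import List Relations.
Import ListNotations.

Record group := Group {
  gcar :> Type;
  gmul : gcar -> gcar -> gcar;
  ginv : gcar -> gcar;
  gone : gcar;
  gmulA : forall x y z, gmul x (gmul y z) = gmul (gmul x y) z;
  gmul1 : forall x, gmul gone x = x;
  gmulV : forall x, gmul (ginv x) x = gone
}.

Definition infinite_group (G : group) : Prop :=
  ~ exists l : list G, forall x : G, In x l.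

Definition word_prod (G : group) (w : list G) : G :=
  fold_right (gmul G) (gone G) w.

Definition generates (G : group) (S : list G) : Prop :=
  forall g : G, exists w : list G,
    (forall x, In x w -> exists s, In s S /\ (x = s \/ x = ginv G s)) /\
    g = word_prod G w.

Definition cay_adj (G : group) (S : list G) (g h : G) : Prop :=
  exists s, In s S /\ (h = gmul G g s \/ h = gmul G g (ginv G s)).

Fixpoint walk {V : Type} (E : V -> V -> Prop) (x : V) (l : list V) : Prop :=
  match l with
  | [] => True
  | y :: l' => E x y /\ walk E y l'
  end.

Definition has_cycle {V : Type} (E : V -> V -> Prop) : Prop :=
  exists (x0 : V) (xs : list V),
    NoDup (x0 :: xs) /\ 2 <= length xs /\ walk E x0 xs /\ E (last xs x0) x0.

Definition connected {V : Type} (E : V -> V -> Prop) : Prop :=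
  forall x y : V, clos_refl_trans V E x y.

Definition is_tree {V : Type} (E : V -> V -> Prop) : Prop :=
  (forall x y, E x y -> E y x) /\ (forall x, ~ E x x) /\
  connected E /\ ~ has_cycle E.

Definition has_degree {V : Type} (E : V -> V -> Prop) (x : V) (d : nat) : Prop :=
  exists l : list V, NoDup l /\ length l = d /\ (forall y, In y l <-> E x y).

Definition regular_spanning_tree {V : Type} (A E : V -> V -> Prop) : Prop :=
  (forall x y, E x y -> A x y) /\ is_tree E /\
  exists d : nat, forall x, has_degree E x d.

(* Main.v *)
Require Import Defs.
From Stdlib Require Import List.
From Stdlib Require Import List Relations Lia Classical Eqdep_dec Bool.
Import ListNotations.

Inductive L := A | B | C.

Definition cons_l (c : L) (w : list L) : list L :=
 match c, w with
 | A, A :: w' => w'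
 | A, _ => A :: w
 | B, B :: w' => C :: w'
 | B, C :: w' => w'
 | B, _ => B :: w
 | C, B :: w' => w'
 | C, C :: w' => B :: w'
 | C, _ => C :: w
 end.
Arguments cons_l c w : simpl nomatch.

Definition ok x y := match x, y with A, A => false | A, _ => true | _, A => true | _, _ => false end.
Fixpoint red (w : list L) : bool :=
  match w with [] => true | x :: w' => match w' with [] => true | y :: _ => ok x y end && red w' end.

Definition act (x z : list L) := fold_right cons_l z x.

Lemma red_tail c w : red (c :: w) = true -> red w = true.
Proof. simpl. destruct w; auto. intros H; apply andb_prop in H; tauto. Qed.

Lemma red_cons c w : red w = true -> red (cons_l c w) = true.
Proof.
  intros H. destruct c; destruct w as [|h [|h2 w]]; try destruct h; try destruct h2;
  simpl in *; auto; try (apply andb_prop in H; destruct H as [H1 H2]; simpl in *; auto);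
  try discriminate.
Qed.

Lemma red_act w z : red z = true -> red (act w z) = true.
Proof. induction w; simpl; auto. intros; apply red_cons; auto. Qed.

Lemma pairs z : red z = true ->
  cons_l A (cons_l A z) = z /\ cons_l B (cons_l C z) = z /\ cons_l C (cons_l B z) = z /\
  cons_l B (cons_l B z) = cons_l C z /\ cons_l C (cons_l C z) = cons_l B z.
Proof.
  intros H. destruct z as [|h [|h2 z]]; try destruct h; try destruct h2; simpl in *;
  repeat split; auto; discriminate.
Qed.

Lemma act_cons c w z : red z = true -> act (cons_l c w) z = cons_l c (act w z).
Proof.
  intros H.
  destruct c; destruct w as [|h w]; try destruct h; simpl; try reflexivity;
  pose proof (pairs _ (red_act w z H)) as (P1&P2&P3&P4&P5); auto.
Qed.

Lemma act_assoc x y z : red z = true -> act (act x y) z = act x (act y z).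
Proof.
  intros H. induction x; simpl; auto.
  rewrite act_cons; auto. rewrite IHx; auto.
Qed.

Lemma cons_red_id c w : red (c :: w) = true -> cons_l c w = c :: w.
Proof. destruct c; destruct w as [|h w]; try destruct h; simpl; auto; discriminate. Qed.

Lemma act_nil_red w : red w = true -> act w [] = w.
Proof.
  induction w; simpl; auto. intros H. rewrite IHw by (eapply red_tail; eauto).
  apply cons_red_id; auto.
Qed.

Definition swap c := match c with A => A | B => C | C => B end.
Definition inv w := rev (map swap w).

Lemma act_app l1 l2 z : act (l1 ++ l2) z = act l1 (act l2 z).
Proof. unfold act. apply fold_right_app. Qed.

Lemma act_inv_cancel w z : red z = true -> act (w ++ inv w) z = z.
Proof.
  revert z; induction w as [|c w IH]; intros z H; simpl; auto.
  unfold inv; simpl. rewrite app_assoc. fold (inv w). rewrite act_app.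
  simpl. rewrite IH. 2: apply red_cons; auto.
  pose proof (pairs _ H). destruct c; simpl; tauto.
Qed.

Definition GT := {w : list L | red w = true}.

Lemma sig_eq (x y : GT) : proj1_sig x = proj1_sig y -> x = y.
Proof.
  destruct x as [x Hx], y as [y Hy]; simpl; intros ->.
  f_equal. apply UIP_dec. apply bool_dec.
Qed.

Definition gm (x y : GT) : GT := exist _ (act (proj1_sig y) (proj1_sig x)) (red_act _ _ (proj2_sig x)).
Definition gi (x : GT) : GT := exist _ (act (inv (proj1_sig x)) []) (red_act _ [] eq_refl).
Definition g1 : GT := exist _ [] eq_refl.

Lemma gmA x y z : gm x (gm y z) = gm (gm x y) z.
Proof. apply sig_eq; simpl. apply act_assoc. apply proj2_sig. Qed.
Lemma gm1 x : gm g1 x = x.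
Proof. apply sig_eq; simpl. apply act_nil_red, proj2_sig. Qed.
Lemma gmV x : gm (gi x) x = g1.
Proof. apply sig_eq; simpl. rewrite <- act_app. apply act_inv_cancel. reflexivity. Qed.

Definition Gr : group := Group GT gm gi g1 gmA gm1 gmV.

From Stdlib Require Import List Relations Lia Classical Eqdep_dec Bool.
Import ListNotations.

Definition mk (w : list L) (H : red w = true) : GT := exist _ w H.
Definition ea : GT := exist _ [A] eq_refl.
Definition eb : GT := exist _ [B] eq_refl.
Definition ec : GT := exist _ [C] eq_refl.
Definition ee : GT := g1.
Definition eba : GT := exist _ [A;B] eq_refl.
Definition eca : GT := exist _ [A;C] eq_refl.
Definition S0 : list Gr := [ea; eb].

Definition rmul (x : GT) (l : L) : GT := exist _ (cons_l l (proj1_sig x)) (red_cons _ _ (proj2_sig x)).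

Lemma adj (x y : GT) : cay_adj Gr S0 x y -> y = rmul x A \/ y = rmul x B \/ y = rmul x C.
Proof.
  intros (s & Hs & H). simpl in Hs. destruct Hs as [Hs|[Hs|[]]]; subst s;
  destruct H as [ -> | -> ]; [left|left|right;left|right;right]; apply sig_eq; reflexivity.
Qed.

Fixpoint alt n := match n with 0 => [] | S n => B :: A :: alt n end.
Lemma red_alt n : red (alt n) = true.
Proof. induction n; simpl; auto. destruct n; simpl in *; auto. Qed.
Lemma len_alt n : length (alt n) = 2 * n.
Proof. induction n; simpl; lia. Qed.

Lemma infinite : infinite_group Gr.
Proof.
  intros [l Hl].
  set (M := fold_right (fun (x : GT) acc => length (proj1_sig x) + acc) 0 l).
  assert (HM : forall x, In x l -> length (proj1_sig x) <= M).
  { subst M. clear Hl. induction l as [|a0 l IHl]; simpl; intros x Hx; [destruct Hx|]. destruct Hx as [Hx|Hx]; [subst x; lia|].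
    specialize (IHl x Hx). lia. }
  specialize (HM _ (Hl (exist _ (alt (S M)) (red_alt (S M))))). simpl in HM.
  rewrite len_alt in HM. lia.
Qed.

Lemma wp_app (l m : list Gr) : word_prod Gr (l ++ m) = gm (word_prod Gr l) (word_prod Gr m).
Proof.
  induction l; simpl. symmetry; apply gm1. change (gm a (word_prod Gr (l ++ m)) = gm (gm a (word_prod Gr l)) (word_prod Gr m)). rewrite IHl. apply gmA.
Qed.

Definition gen (c : L) : GT := match c with A => ea | B => eb | C => gi eb end.

Lemma gens : generates Gr S0.
Proof.
  intros [w Hw]. revert Hw. induction w as [|c w IH]; intros Hw.
  - exists []. split. simpl; tauto. apply sig_eq; reflexivity.
  - destruct (IH (red_tail _ _ Hw)) as (ws & H1 & H2).
    exists (ws ++ [gen c]). split.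
    + intros x Hx. apply in_app_or in Hx. destruct Hx as [Hx|[Hx|[]]]; auto. subst x.
      destruct c; simpl; [exists ea|exists eb|exists eb]; simpl; tauto.
    + rewrite wp_app, <- H2. apply sig_eq. simpl.
      rewrite <- (cons_red_id _ _ Hw). destruct c; reflexivity.
Qed.

From Stdlib Require Import List Relations Lia Classical Eqdep_dec Bool.
Import ListNotations.


Lemma closed_reach {V} (E : V -> V -> Prop) (Q : V -> Prop) x y :
  (forall u w, E u w -> Q u -> Q w) -> clos_refl_trans V E x y -> Q x -> Q y.
Proof. intros HQ H; induction H; eauto. Qed.

Lemma bridge {V} (E : V -> V -> Prop) (Q : V -> Prop) u v :
  (forall x y, E x y -> Q x -> ~ Q y -> x = u /\ y = v) ->
  ~ E u v -> Q u -> ~ Q v -> connected E -> False.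
Proof.
  intros HB Huv Hu Hv Hc. apply Hv. apply (closed_reach E Q u v); auto.
  intros x y Hxy Hx. destruct (classic (Q y)) as [?|Hy]; auto.
  destruct (HB x y Hxy Hx Hy); subst; contradiction.
Qed.


Lemma deg_le3 {V} (E : V -> V -> Prop) (v p q r : V) (Hn : forall y, E v y -> y = p \/ y = q \/ y = r) d : has_degree E v d -> d <= 3.
Proof.
  intros (l & Hl & Hd & Hi). subst d. change 3 with (length [p;q;r]).
  apply NoDup_incl_length; auto. intros y Hy. apply Hi, Hn in Hy. simpl. intuition congruence.
Qed.

Lemma deg_miss {V} (E : V -> V -> Prop) (v p q r : V) (Hn : forall y, E v y -> y = p \/ y = q \/ y = r) d : has_degree E v d -> ~ E v p -> d <= 2.
Proof.
  intros (l & Hl & Hd & Hi) Hp. subst d. change 2 with (length [q;r]).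
  apply NoDup_incl_length; auto. intros y Hy. apply Hi in Hy.
  pose proof (Hn _ Hy). simpl. intuition congruence.
Qed.

Lemma deg_miss2 {V} (E : V -> V -> Prop) (v p q r : V) (Hn : forall y, E v y -> y = p \/ y = q \/ y = r) d : has_degree E v d -> ~ E v p -> ~ E v q -> d <= 1.
Proof.
  intros (l & Hl & Hd & Hi) Hp Hq. subst d. change 1 with (length [r]).
  apply NoDup_incl_length; auto. intros y Hy. apply Hi in Hy.
  pose proof (Hn _ Hy). simpl. intuition congruence.
Qed.

From Stdlib Require Import List Relations Lia Classical Eqdep_dec Bool.
Import ListNotations.

Fixpoint lastL (x : list L) : option L :=
  match x with [] => None | [u] => Some u | _ :: r => lastL r end.
Fixpoint last2 (x : list L) : option (L * L) :=
  match x with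
  | u :: ((v :: t) as r) => match t with [] => Some (u, v) | _ => last2 r end
  | _ => None end.

Lemma lastL_step s w : lastL w <> Some A -> lastL (cons_l s w) = Some A -> w = [] /\ s = A.
Proof.
  destruct w as [|h1 [|h2 [|h3 t]]]; destruct s; try destruct h1; try destruct h2;
  simpl; intuition congruence.
Qed.

Lemma last2_step h s w : h <> A -> last2 w <> Some (A, h) -> last2 (cons_l s w) = Some (A, h) ->
  w = [h] /\ s = A.
Proof.
  intros Hh.
  destruct w as [|h1 [|h2 [|h3 t]]]; destruct s; try destruct h1; try destruct h2; destruct h;
  simpl; intuition congruence.
Qed.

From Stdlib Require Import List Relations Lia Classical Eqdep_dec Bool.
Import ListNotations.

Lemma deg_all3 {V} (E : V -> V -> Prop) v p q r d :
  NoDup [p;q;r] -> E v p -> E v q -> E v r -> has_degree E v d -> 3 <= d.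
Proof.
  intros HN Hp Hq Hr (l & Hl & Hd & Hi). subst d. change 3 with (length [p;q;r]).
  apply NoDup_incl_length; auto. intros y Hy. simpl in Hy.
  destruct Hy as [<-|[<-|[<-|[]]]]; apply Hi; auto.
Qed.

Ltac neq := let H := fresh in intro H; apply (f_equal (@proj1_sig _ _)) in H; discriminate.
Ltac dH H := apply (f_equal (@proj1_sig _ _)) in H; discriminate.
Ltac nd3 := let H := fresh in
  apply NoDup_cons; [simpl; intros [H|[H|[]]]; dH H |
  apply NoDup_cons; [simpl; intros [H|[]]; dH H |
  apply NoDup_cons; [simpl; intros [] | constructor]]].

Theorem proposition5p9 :
  exists (G : group) (S : list G),
    infinite_group G /\ generates G S /\
    ~ exists E : G -> G -> Prop, regular_spanning_tree (cay_adj G S) E.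
Proof.
  exists Gr, S0. split; [apply infinite|split; [apply gens|]].
  intros (E & Hsub & (Hsym & Hirr & Hcon & Hcyc) & d & Hd).
  assert (N : forall x y, E x y -> y = rmul x A \/ y = rmul x B \/ y = rmul x C)
    by (intros; apply adj, Hsub; auto).
  assert (Ne : forall y, E ee y -> y = ea \/ y = eb \/ y = ec).
  { intros y H; destruct (N _ _ H) as [ -> | [ -> | -> ] ]; [left|right;left|right;right];
    apply sig_eq; reflexivity. }
  assert (Nb : forall y, E eb y -> y = eba \/ y = ec \/ y = ee).
  { intros y H; destruct (N _ _ H) as [ -> | [ -> | -> ] ]; [left|right;left|right;right];
    apply sig_eq; reflexivity. }
  assert (Nc : forall y, E ec y -> y = eca \/ y = ee \/ y = eb).
  { intros y H; destruct (N _ _ H) as [ -> | [ -> | -> ] ]; [left|right;left|right;right];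
    apply sig_eq; reflexivity. }
  assert (Hab : ea <> eb) by neq. assert (Hae : ea <> ee) by neq. assert (Hbe : eb <> ee) by neq.
  pose proof (deg_le3 E _ _ _ _ Ne d (Hd ee)) as Hle.
  destruct d as [|[|[|[|d]]]]; try lia.
  -
    destruct (Hd ee) as (l & _ & Hl & Hi). destruct l; [|discriminate].
    apply Hae. apply (closed_reach E (fun x => x = ee) ee ea); auto.
    intros u w Huw ->. apply Hi in Huw. destruct Huw.
  -
    destruct (Hd ee) as (l & _ & Hl & Hi). destruct l as [|y [|]]; try discriminate.
    assert (Hy : E ee y) by (apply Hi; simpl; auto).
    destruct (Hd y) as (l' & _ & Hl' & Hi'). destruct l' as [|z [|]]; try discriminate.
    assert (Hz : z = ee).
    { assert (In ee [z]) as H by (apply Hi'; apply Hsym; auto). destruct H as [H|[]]; auto. }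
    subst z.
    assert (Q : forall t, clos_refl_trans _ E ee t -> t = ee \/ t = y).
    { intros t Ht. apply (closed_reach E (fun x => x = ee \/ x = y) ee t); auto.
      intros u w Huw [ -> | -> ].
      - apply Hi in Huw. destruct Huw as [<-|[]]; auto.
      - apply Hi' in Huw. destruct Huw as [<-|[]]; auto. }
    destruct (Q ea (Hcon _ _)) as [?|?]; [contradiction|].
    destruct (Q eb (Hcon _ _)) as [?|?]; [contradiction|]. congruence.
  -
    assert (Pe : E ee ea).
    { apply NNPP; intro H.
      apply (bridge E (fun x => lastL (proj1_sig x) <> Some A) ee ea) ; [ | exact H | | | exact Hcon ].
      - intros x y Hxy Hx Hy. apply NNPP in Hy.
        destruct (N _ _ Hxy) as [ -> | [ -> | -> ] ]; simpl in Hy;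
        destruct (lastL_step _ _ Hx Hy) as [H1 H2]; try discriminate;
        split; apply sig_eq; simpl; rewrite H1; reflexivity.
      - simpl; congruence.
      - simpl; congruence. }
    assert (Pb : E eb eba).
    { apply NNPP; intro H.
      apply (bridge E (fun x => last2 (proj1_sig x) <> Some (A, B)) eb eba) ; [ | exact H | | | exact Hcon ].
      - intros x y Hxy Hx Hy. apply NNPP in Hy.
        destruct (N _ _ Hxy) as [ -> | [ -> | -> ] ]; simpl in Hy;
        destruct (last2_step B _ _ ltac:(discriminate) Hx Hy) as [H1 H2]; try discriminate;
        split; apply sig_eq; simpl; rewrite H1; reflexivity.
      - simpl; congruence.
      - simpl; congruence. }
    assert (Pc : E ec eca).
    { apply NNPP; intro H.
      apply (bridge E (fun x => last2 (proj1_sig x) <> Some (A, C)) ec eca) ; [ | exact H | | | exact Hcon ].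
      - intros x y Hxy Hx Hy. apply NNPP in Hy.
        destruct (N _ _ Hxy) as [ -> | [ -> | -> ] ]; simpl in Hy;
        destruct (last2_step C _ _ ltac:(discriminate) Hx Hy) as [H1 H2]; try discriminate;
        split; apply sig_eq; simpl; rewrite H1; reflexivity.
      - simpl; congruence.
      - simpl; congruence. }
    assert (e1 : ~ (E ee eb /\ E ee ec)).
    { intros [H1 H2]. pose proof (deg_all3 E ee ea eb ec 2 ltac:(nd3) Pe H1 H2 (Hd ee)). lia. }
    assert (e2 : ~ (~ E ee eb /\ ~ E ee ec)).
    { intros [H1 H2]. pose proof (deg_miss2 E ee eb ec ea
        ltac:(intros y Hy; destruct (Ne y Hy) as [?|[?|?]]; tauto) 2 (Hd ee) H1 H2). lia. }
    assert (b1 : ~ (E eb ec /\ E eb ee)).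
    { intros [H1 H2]. pose proof (deg_all3 E eb eba ec ee 2 ltac:(nd3) Pb H1 H2 (Hd eb)). lia. }
    assert (b2 : ~ (~ E eb ec /\ ~ E eb ee)).
    { intros [H1 H2]. pose proof (deg_miss2 E eb ec ee eba
        ltac:(intros y Hy; destruct (Nb y Hy) as [?|[?|?]]; tauto) 2 (Hd eb) H1 H2). lia. }
    assert (c1 : ~ (E ec ee /\ E ec eb)).
    { intros [H1 H2]. pose proof (deg_all3 E ec eca ee eb 2 ltac:(nd3) Pc H1 H2 (Hd ec)). lia. }
    assert (c2 : ~ (~ E ec ee /\ ~ E ec eb)).
    { intros [H1 H2]. pose proof (deg_miss2 E ec ee eb eca
        ltac:(intros y Hy; destruct (Nc y Hy) as [?|[?|?]]; tauto) 2 (Hd ec) H1 H2). lia. }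
    assert (s1 : E eb ee <-> E ee eb) by (split; apply Hsym).
    assert (s2 : E ec eb <-> E eb ec) by (split; apply Hsym).
    assert (s3 : E ec ee <-> E ee ec) by (split; apply Hsym).
    rewrite s1 in b1, b2. rewrite s2, s3 in c1, c2.
    destruct (classic (E ee eb)); destruct (classic (E eb ec)); destruct (classic (E ee ec)); tauto.
  -
    assert (t1 : E ee eb).
    { apply NNPP; intro H. pose proof (deg_miss E ee eb ea ec
        ltac:(intros y Hy; destruct (Ne y Hy) as [?|[?|?]]; tauto) 3 (Hd ee) H). lia. }
    assert (t3 : E ee ec).
    { apply NNPP; intro H. pose proof (deg_miss E ee ec ea eb
        ltac:(intros y Hy; destruct (Ne y Hy) as [?|[?|?]]; tauto) 3 (Hd ee) H). lia. }
    assert (t2 : E eb ec).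
    { apply NNPP; intro H. pose proof (deg_miss E eb ec eba ee
        ltac:(intros y Hy; destruct (Nb y Hy) as [?|[?|?]]; tauto) 3 (Hd eb) H). lia. }
    apply Hcyc. exists ee, [eb; ec]. split; [nd3|]. split; [simpl; lia|].
    split; [simpl; tauto|]. simpl. apply Hsym; auto.
Qed.
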